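(* Let $C>0$, and let $Q_1,\dots,Q_m,\widehat Q_1,\dots,\widehat Q_m$ be probability distributions on $\mathbb{R}^d$ all supported in $\{x:\|x\|_2\le C\}$. Let $\pi,\widehat\pi$ be probability vectors on $[m]$ and set $Q=\sum_i\pi_iQ_i$, $\widehat Q=\sum_i\widehat\pi_i\widehat Q_i$. Suppose $\mathrm{TV}(\widehat\pi,\pi)\le\alpha$ and $\mathcal W_2(\widehat Q_i,Q_i)\le\epsilon$ for all $i\in[m]$. Then $$\mathcal W_2(\widehat Q,Q)\le\epsilon+2C\sqrt\alpha.$$
   Context: $\mathrm{TV}(\widehat\pi,\pi)=\frac12\sum_i|\widehat\pi_i-\pi_i|$; $\mathcal W_2$ is the Wasserstein-2 distance with Euclidean cost. *)

(* Defs.v *)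
From HB Require Import structures.
From mathcomp Require Import all_boot all_order all_algebra.
From mathcomp Require Import all_classical all_reals all_analysis.
Set Implicit Arguments. Unset Strict Implicit. Unset Printing Implicit Defensive.
Import Order.TTheory GRing.Theory Num.Theory.
Local Open Scope classical_set_scope.
Local Open Scope ring_scope.

(* R^d is modelled as d.-tuple R with the product (= Borel) sigma-algebra
   provided by MathComp-Analysis (measure_tuple_display). *)

Section defs.
Context {R : realType} {d : nat}.

Definition sqdist (x y : d.-tuple R) : R :=
  \sum_(i < d) (tnth x i - tnth y i) ^+ 2.

Definition eucl_norm (x : d.-tuple R) : R :=
  Num.sqrt (\sum_(i < d) (tnth x i) ^+ 2).

Definition couplings (P Q : probability (d.-tuple R) R)
  : set (probability (d.-tuple R * d.-tuple R)%type R) :=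
  [set g | (forall A, measurable A -> g (A `*` setT) = P A) /\
           (forall B, measurable B -> g (setT `*` B) = Q B)].

Definition W2 (P Q : probability (d.-tuple R) R) : \bar R :=
  let c := ereal_inf [set (\int[g]_z (sqdist z.1 z.2)%:E)%E
                     | g in couplings P Q] in
  match c with
  | r%:E => (Num.sqrt r)%:E
  | _ => c
  end.

End defs.

Definition prob_vec {R : realType} {m : nat} (p : 'I_m -> R) : Prop :=
  (forall i, 0 <= p i) /\ \sum_(i < m) p i = 1.

Definition TV {R : realType} {m : nat} (p q : 'I_m -> R) : R :=
  2^-1 * \sum_(i < m) `|p i - q i|.

(* Main.v *)
Require Import Defs.
From HB Require Import structures.
From mathcomp Require Import all_boot all_order all_algebra.
From mathcomp Require Import all_classical all_reals all_analysis.
From mathcomp Require Import measurable_realfun lra.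
Import Order.TTheory GRing.Theory Num.Theory.
Local Open Scope classical_set_scope.
Local Open Scope ring_scope.

Set Implicit Arguments. Unset Strict Implicit. Unset Printing Implicit Defensive.
Section mix.
Local Open Scope ereal_scope.
Context d (T : measurableType d) (R : realType) (I : finType).
Variables (w : I -> R) (hw : forall i, (0 <= w i)%R)
  (mu : I -> {measure set T -> \bar R}).

Definition mfam : seq {measure set T -> \bar R} :=
  [seq (mscale (NngNum (hw i)) (mu i) : {measure set T -> \bar R}) | i <- enum I].

Definition mz : {measure set T -> \bar R} := mzero.
Definition mixseq (k : nat) : {measure set T -> \bar R} := nth mz mfam k.

Definition mixm := msum mixseq (size mfam).

Lemma mixmE A : mixm A = \sum_(i : I) (w i)%:E * mu i A.
Proof.
rewrite /mixm /msum /mixseq -(big_mkord xpredT (fun k => nth mz mfam k A)).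
rewrite -(big_nth mz xpredT (fun m : {measure set T -> \bar R} => m A)).
by rewrite big_map big_enum.
Qed.

Lemma mix_integral (D : set T) (mD : measurable D) (f : T -> \bar R) :
  (forall x, D x -> 0 <= f x) -> measurable_fun D f ->
  \int[mixm]_(x in D) f x = \sum_(i : I) (w i)%:E * \int[mu i]_(x in D) f x.
Proof.
move=> f0 mf; rewrite /mixm ge0_integral_measure_sum //.
rewrite /mixseq -(big_mkord xpredT (fun k => \int[nth mz mfam k]_(x in D) f x)).
rewrite -(big_nth mz xpredT (fun m : {measure set T -> \bar R} => \int[m]_(x in D) f x)).
rewrite big_map big_enum /=; apply: eq_bigr => i _.
by rewrite ge0_integral_mscale.
Qed.

Variable (H1 : mixm setT = 1).
Definition pmix : probability T R :=
  HB.pack_for (probability T R) (msum mixseq (size mfam)) (Measure_isProbability.Build _ _ _ (msum mixseq (size mfam)) H1).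

Lemma pmixE A : pmix A = mixm A. Proof. by []. Qed.
End mix.
Section aux.
Context (R : realType) (d : nat).
Local Notation T := (d.-tuple R).

Lemma sqdist_ge0 (x y : T) : 0 <= sqdist x y.
Proof. by apply: sumr_ge0 => i _; exact: sqr_ge0. Qed.

Lemma meas_sqdist : measurable_fun setT (fun z : T * T => sqdist z.1 z.2).
Proof.
apply: measurable_sum => i; apply: measurable_funX; apply: measurable_funB.
- exact: (measurableT_comp (measurable_tnth i) measurable_fst).
- exact: (measurableT_comp (measurable_tnth i) measurable_snd).
Qed.

Lemma meas_norm : measurable_fun setT (@eucl_norm R d).
Proof.
apply: (measurableT_comp (continuous_measurable_fun (@sqrt_continuous R))).
apply: measurable_sum => i; apply: measurable_funX.
exact: measurable_tnth.
Qed.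

Lemma measB (C : R) : measurable [set x : T | C < eucl_norm x].
Proof.
rewrite -preimage_itvoy -[X in measurable X]setTI.
by apply: meas_norm => //; exact: measurable_itv.
Qed.

Lemma sq_norm_le (C : R) (x : T) : eucl_norm x <= C -> \sum_(i < d) (tnth x i) ^+ 2 <= C ^+ 2.
Proof.
move=> h; have s0 : 0 <= \sum_(i < d) (tnth x i) ^+ 2 by apply: sumr_ge0 => i _; exact: sqr_ge0.
rewrite -(sqr_sqrtr s0); have := sqrtr_ge0 (\sum_(i < d) (tnth x i) ^+ 2).
move: h; rewrite /eucl_norm => h h0; nra.
Qed.

Lemma sqdist_bound (C : R) (x y : T) : eucl_norm x <= C -> eucl_norm y <= C ->
  sqdist x y <= 4 * C ^+ 2.
Proof.
move=> hx hy; have := sq_norm_le hx; have := sq_norm_le hy => hy2 hx2.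
apply: (@le_trans _ _ (2 * \sum_(i < d) (tnth x i) ^+ 2 + 2 * \sum_(i < d) (tnth y i) ^+ 2)).
  rewrite !mulr_sumr -big_split /=; apply: ler_sum => i _.
  set a := tnth x i; set b := tnth y i.
  have : 0 <= (a + b) ^+ 2 by exact: sqr_ge0.
  by rewrite sqrrB sqrrD => h; lra.
lra.
Qed.


Lemma prod_bound (C : R) (P Q : probability T R) :
  P [set x | C < eucl_norm x] = 0%E -> Q [set x | C < eucl_norm x] = 0%E ->
  (\int[P \x Q]_z (sqdist z.1 z.2)%:E <= (4 * C ^+ 2)%:E)%E.
Proof.
move=> PB QB.
have mB := measB C.
have -> : (4 * C ^+ 2)%:E = (\int[P \x Q]_z (cst (4 * C ^+ 2)%:E) z)%E.
  rewrite integral_cst //= -setXTT product_measure1E //.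
  have hP : P setT = 1%E := probability_setT P.
  have hQ : Q setT = 1%E := probability_setT Q.
  by move: hP hQ; rewrite /= => -> ->; rewrite !mule1.
apply: ae_ge0_le_integral => //.
- by move=> z _; rewrite lee_fin sqdist_ge0.
- by apply/measurable_EFinP; exact: meas_sqdist.
- by move=> z _; rewrite lee_fin mulr_ge0 // sqr_ge0.
exists (([set x | C < eucl_norm x] `*` setT) `|` (setT `*` [set x | C < eucl_norm x])); split.
- by apply: measurableU; apply: measurableX.
- apply/eqP; rewrite eq_le measure_ge0 andbT.
  apply: le_trans (measureU2 _ _ _) _; try by apply: measurableX.
  rewrite /= !product_measure1E //.
  have hP : P setT = 1%E := probability_setT P.
  have hQ : Q setT = 1%E := probability_setT Q.
  move: PB QB hP hQ; rewrite /= => -> -> -> ->; rewrite mul0e mule0 adde0.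
  by [].
- move=> z /= hz; apply: contra_notP hz => /not_orP [h1 h2] _.
  rewrite lee_fin; apply: sqdist_bound.
  + by rewrite leNgt; apply/negP => h; apply: h1.
  + by rewrite leNgt; apply/negP => h; apply: h2.
Qed.


Definition costset (P Q : probability T R) :=
  [set (\int[g]_z (sqdist z.1 z.2)%:E)%E | g in couplings P Q].

Lemma inf_ge0 (P Q : probability T R) : (0 <= ereal_inf (costset P Q))%E.
Proof.
apply: le_ereal_inf_tmp => _ [g _ <-]; apply: integral_ge0 => z _.
by rewrite lee_fin sqdist_ge0.
Qed.

Lemma W2_approx (P Q : probability T R) (eps : R) : (W2 P Q <= eps%:E)%E ->
  0 <= eps /\ forall e, 0 < e -> exists2 g, couplings P Q g &
    (\int[g]_z (sqdist z.1 z.2)%:E <= (eps ^+ 2 + e)%:E)%E.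
Proof.
have c0 := inf_ge0 P Q; move: c0; rewrite /W2 /= -/(costset P Q).
case E : (ereal_inf (costset P Q)) => [r| |] c0 hW.
- rewrite lee_fin in hW; rewrite lee_fin in c0.
  have eps0 : 0 <= eps by exact: le_trans (sqrtr_ge0 _) hW.
  split => // e e0.
  have : (ereal_inf (costset P Q) < (eps ^+ 2 + e)%:E)%E.
    rewrite E lte_fin; rewrite -(sqr_sqrtr c0).
    have := sqrtr_ge0 r; nra.
  move=> /ereal_inf_lt [_ [g hg <-] hlt]; exists g => //.
  exact: ltW.
- by move: hW; rewrite leye_eq.
- by move: c0.
Qed.

Lemma W2_upper (P Q : probability T R) (K : R) : 0 <= K ->
  (forall e, 0 < e -> exists2 g, couplings P Q g &
    (\int[g]_z (sqdist z.1 z.2)%:E <= (K + e)%:E)%E) ->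
  (W2 P Q <= (Num.sqrt K)%:E)%E.
Proof.
move=> K0 H.
have hc : (ereal_inf (costset P Q) <= K%:E)%E.
  apply/lee_addgt0Pr => e e0; have [g hg hi] := H e e0.
  apply: ge_ereal_inf; exists (\int[g]_z (sqdist z.1 z.2)%:E)%E => //.
  by exists g.
have c0 := inf_ge0 P Q; move: c0 hc; rewrite /W2 /= -/(costset P Q).
case E : (ereal_inf (costset P Q)) => [r| |] c0 hc.
- by rewrite lee_fin; apply: ler_wsqrtr; rewrite -lee_fin.
- by move: hc; rewrite leye_eq.
- by move: c0.
Qed.

End aux.
Unset Implicit Arguments. Set Strict Implicit. Set Printing Implicit Defensive.
Lemma min_facts (R : realType) (x y : R) :
  [/\ 0 <= x - Order.min x y, 0 <= y - Order.min x y,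
      `|x - y| = (x - Order.min x y) + (y - Order.min x y) &
      (0 <= x -> 0 <= y -> 0 <= Order.min x y)].
Proof.
rewrite /Order.min; case: ifP => h; split.
- by rewrite subrr.
- by rewrite subr_ge0 ltW.
- by rewrite subrr add0r ltr0_norm ?subr_lt0 // opprB.
- by [].
- by rewrite subr_ge0 leNgt h.
- by rewrite subrr.
- by rewrite subrr addr0 ger0_norm // subr_ge0 leNgt h.
- by [].
Qed.

Lemma final_ineq (R : realType) (eps C alpha : R) : 0 <= eps -> 0 < C -> 0 <= alpha ->
  Num.sqrt (eps ^+ 2 + 4 * C ^+ 2 * alpha) <= eps + 2 * C * Num.sqrt alpha.
Proof.
move=> e0 C0 a0.
have s0 := sqrtr_ge0 alpha; have s2 := sqr_sqrtr a0.
have h0 : 0 <= eps + 2 * C * Num.sqrt alpha.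
  by apply: addr_ge0 => //; apply: mulr_ge0 => //; apply: mulr_ge0 => //; exact: ltW.
rewrite -[leRHS](ger0_norm h0) -sqrtr_sqr; apply: ler_wsqrtr.
move: s0 s2; set s := Num.sqrt alpha => s0 s2.
rewrite -s2; have := mulr_ge0 (mulr_ge0 e0 (ltW C0)) s0; nra.
Qed.

Theorem lemmaB5 (R : realType) (d m : nat) (C alpha eps : R)
  (Qs Qhs : 'I_m -> probability (d.-tuple R) R)
  (pi pih : 'I_m -> R)
  (Q Qh : probability (d.-tuple R) R) :
  0 < C ->
  (forall i, Qs i [set x | C < eucl_norm x] = 0%E) ->
  (forall i, Qhs i [set x | C < eucl_norm x] = 0%E) ->
  prob_vec pi -> prob_vec pih ->
  (forall A, measurable A -> Q A = (\sum_(i < m) (pi i)%:E * Qs i A)%E) ->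
  (forall A, measurable A -> Qh A = (\sum_(i < m) (pih i)%:E * Qhs i A)%E) ->
  TV pih pi <= alpha ->
  (forall i, (W2 (Qhs i) (Qs i) <= eps%:E)%E) ->
  (W2 Qh Q <= (eps + 2 * C * Num.sqrt alpha)%:E)%E.
Proof.
move=> C0 hQs hQhs [pi0 pis] [pih0 pihs] hQ hQh hTV hW.
have [m0|m0] := posnP m.
  by move: pis; subst m; rewrite big_ord0 => /eqP; rewrite eq_sym oner_eq0.
pose i0 := Ordinal m0.
have eps0 : 0 <= eps by have [] := W2_approx (hW i0).
pose a i := Order.min (pih i) (pi i).
pose u i := pih i - a i.
pose v i := pi i - a i.
pose beta := \sum_(i < m) u i.
have u0 i : 0 <= u i by have [] := @min_facts _ (pih i) (pi i).
have v0 i : 0 <= v i by have [] := @min_facts _ (pih i) (pi i).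
have a0 i : 0 <= a i by have [_ _ _ ->] := @min_facts _ (pih i) (pi i).
have sumu : \sum_(i < m) u i = 1 - \sum_(i < m) a i.
  by rewrite /u sumrB pihs.
have sumv : \sum_(i < m) v i = beta.
  by rewrite /v sumrB pis /beta sumu.
have beta0 : 0 <= beta by apply: sumr_ge0 => i _.
have TVb : TV pih pi = beta.
  have nm i : `|pih i - pi i| = u i + v i by have [] := @min_facts _ (pih i) (pi i).
  rewrite /TV (eq_bigr _ (fun i _ => nm i)) big_split /= sumv -/beta.
  lra.
have ba : beta <= alpha by rewrite -TVb.
have alpha0 : 0 <= alpha by exact: le_trans beta0 ba.
have single (F : 'I_m -> R) i : (forall j, 0 <= F j) -> F i <= \sum_(j < m) F j.
  by move=> F0; rewrite (bigD1 i) //= lerDl sumr_ge0.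
have divK x : 0 <= x -> x <= beta -> x * beta / beta = x.
  move=> x0 xb; have [b0|b0] := eqVneq beta 0; last by rewrite mulfK.
  by rewrite b0 in xb *; rewrite mulr0 mul0r; apply/eqP; rewrite eq_le x0 xb.
have cu i : \sum_(j < m) (u i * v j / beta) = u i.
  by rewrite -mulr_suml -mulr_sumr sumv (divK _ (u0 i) (single _ i u0)).
have cv j : \sum_(i < m) (u i * v j / beta) = v j.
  rewrite -mulr_suml -mulr_suml -/beta [beta * _]mulrC (divK _ (v0 j)) //.
  by rewrite -sumv; exact: single.
apply: le_trans (W2_upper (K := eps ^+ 2 + 4 * C ^+ 2 * alpha) _ _) _; last first.
  by rewrite lee_fin; exact: final_ineq.
  2: by apply: addr_ge0; [exact: sqr_ge0 | apply: mulr_ge0 => //; apply: mulr_ge0 => //; exact: sqr_ge0].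
move=> e e0.
have /choice [G hG] : forall i, exists g, couplings (Qhs i) (Qs i) g /\
    (\int[g]_z (sqdist z.1 z.2)%:E <= (eps ^+ 2 + e)%:E)%E.
  by move=> i; have [_ h] := W2_approx (hW i); have [g h1 h2] := h e e0; exists g.
pose I := ('I_m + 'I_m * 'I_m)%type.
pose w (k : I) : R := match k with inl i => a i | inr ij => u ij.1 * v ij.2 / beta end.
have hw k : 0 <= w k.
  by case: k => [i|[i j]] /=; [apply: a0 | apply: divr_ge0 => //; apply: mulr_ge0].
pose mu (k : I) : {measure set (d.-tuple R * d.-tuple R) -> \bar R} :=
  match k with inl i => (G i : {measure set _ -> \bar R})
  | inr ij => ((Qhs ij.1 \x Qs ij.2)%E : {measure set _ -> \bar R}) end.
have H1 : mixm hw mu setT = 1%E.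
  rewrite mixmE big_sumType /=.
  rewrite (eq_bigr (fun i => (a i)%:E)); last first.
    by move=> i _; have := probability_setT (G i); rewrite /= => ->; rewrite mule1.
  rewrite (eq_bigr (fun p => (u p.1 * v p.2 / beta)%:E)); last first.
    move=> p _; rewrite -setXTT product_measure1E //.
    have := probability_setT (Qhs p.1); have := probability_setT (Qs p.2).
    by rewrite /= => -> ->; rewrite !mule1.
  rewrite !sumEFin -EFinD -(pair_big xpredT xpredT (fun i j => u i * v j / beta)) /=.
  by rewrite (eq_bigr _ (fun i _ => cu i)) sumu; congr (_%:E); lra.
exists (pmix H1).
  split => A mA.
  - rewrite pmixE mixmE big_sumType /= hQh //.
    pose q i := fine (Qhs i A).
    have qE i : Qhs i A = (q i)%:E by rewrite /q fineK // fin_num_measure.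
    rewrite (eq_bigr (fun i => (a i * q i)%:E)); last first.
      move=> i _; have [[c1 _] _] := hG i; rewrite c1 // qE.
      by [].
    rewrite (eq_bigr (fun p => (u p.1 * v p.2 / beta * q p.1)%:E)); last first.
      move=> p _; rewrite product_measure1E //.
      have := probability_setT (Qs p.2); rewrite /= => ->; rewrite mule1 qE.
      by [].
    rewrite [RHS](eq_bigr (fun i => (pih i * q i)%:E)); last first.
      by move=> i _; rewrite qE.
    rewrite !sumEFin -EFinD; congr (_%:E).
    rewrite -(pair_big xpredT xpredT (fun i j => u i * v j / beta * q i)) /=.
    rewrite [X in _ + X](eq_bigr (fun i => u i * q i)); last by move=> i _; rewrite -mulr_suml cu.
    by rewrite -big_split /=; apply: eq_bigr => i _; rewrite /u -mulrDl addrC subrK.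
  - rewrite pmixE mixmE big_sumType /= hQ //.
    pose q i := fine (Qs i A).
    have qE i : Qs i A = (q i)%:E by rewrite /q fineK // fin_num_measure.
    rewrite (eq_bigr (fun i => (a i * q i)%:E)); last first.
      move=> i _; have [[_ c2] _] := hG i; rewrite c2 // qE.
      by [].
    rewrite (eq_bigr (fun p => (u p.1 * v p.2 / beta * q p.2)%:E)); last first.
      move=> p _; rewrite product_measure1E //.
      have := probability_setT (Qhs p.1); rewrite /= => ->; rewrite mul1e qE.
      by [].
    rewrite [RHS](eq_bigr (fun i => (pi i * q i)%:E)); last first.
      by move=> i _; rewrite qE.
    rewrite !sumEFin -EFinD; congr (_%:E).
    rewrite -(pair_big xpredT xpredT (fun i j => u i * v j / beta * q j)) /=.
    rewrite exchange_big /=.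
    rewrite [X in _ + X](eq_bigr (fun j => v j * q j)); last by move=> j _; rewrite -mulr_suml cv.
    by rewrite -big_split /=; apply: eq_bigr => i _; rewrite /v -mulrDl addrC subrK.
have -> : (\int[pmix H1]_z (sqdist z.1 z.2)%:E = \int[mixm hw mu]_z (sqdist z.1 z.2)%:E)%E by [].
rewrite mix_integral //; last 2 first.
  - by move=> z _; rewrite lee_fin sqdist_ge0.
  - by apply/measurable_EFinP; exact: meas_sqdist.
rewrite big_sumType /=.
apply: (@le_trans _ _ ((\sum_(i < m) (a i * (eps ^+ 2 + e))%:E) +
   \sum_(p : 'I_m * 'I_m) (u p.1 * v p.2 / beta * (4 * C ^+ 2))%:E)%E).
  apply: leeD; apply: lee_sum.
  - move=> i _; rewrite EFinM; apply: lee_pmul => //; first by rewrite lee_fin.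
    + by apply: integral_ge0 => z _; rewrite lee_fin sqdist_ge0.
    + exact: (proj2 (hG i)).
  - move=> p _; rewrite [leRHS]EFinM; apply: lee_pmul => //; first by rewrite lee_fin; exact: (hw (inr p)).
    + by apply: integral_ge0 => z _; rewrite lee_fin sqdist_ge0.
    + exact: prod_bound (hQhs p.1) (hQs p.2).
rewrite !sumEFin -EFinD lee_fin.
rewrite -(pair_big xpredT xpredT (fun i j => u i * v j / beta * (4 * C ^+ 2))) /=.
rewrite [X in _ + X](eq_bigr (fun i => u i * (4 * C ^+ 2))); last by move=> i _; rewrite -mulr_suml cu.
rewrite -!mulr_suml -/beta.
have sa : \sum_(i < m) a i = 1 - beta by rewrite /beta sumu; lra.
rewrite sa.
have E0 : 0 <= eps ^+ 2 + e by apply: addr_ge0; [exact: sqr_ge0 | exact: ltW].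
have h1 := mulr_ge0 beta0 E0.
have h2 : 0 <= C ^+ 2 * (alpha - beta) by apply: mulr_ge0; [exact: sqr_ge0 | lra].
nra.

Qed.
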